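(* For integers $\alpha\geq 3$, $\beta\geq 9$, $\rho\geq 4$, let $k_\alpha=2^{2\alpha}+2^\alpha+2$, $K_\beta=2^{2\beta+1}+3\cdot 2^{\beta+3}+49$, $\kappa_\rho=2^\rho+2$, and let $\chi(\rho)=1$ if $\rho$ is even and $\chi(\rho)=2$ if $\rho$ is odd. Then $\Gamma(k_\alpha)\geq 3\cdot 2^{2\alpha}-2^\alpha+1$, $\Gamma(K_\beta)\geq 3\cdot 2^{2\beta+1}-2^{\beta-1}+1$, and $\Gamma(\kappa_\rho)\geq 5\cdot 2^{\rho-1}-8\chi(\rho)+1$.
   Context: The Thue–Morse word is $\mathbf t=\mathbf t_1\mathbf t_2\cdots$ where $\mathbf t_i\in\{0,1\}$ has the parity of the number of $1$'s in the binary expansion of $i-1$. For positive integers $\alpha\le\beta$, $\langle\alpha,\beta\rangle=\mathbf t_\alpha\cdots\mathbf t_\beta$. A $k$-anti-power is a word $w_1\cdots w_k$ with $w_1,\dots,w_k$ pairwise distinct words of equal length. $\mathcal F(k)$ is the set of odd positive integers $m$ such that $\langle 1,km\rangle$ is a $k$-anti-power. $\Gamma(k)=\sup\big((2\mathbb Z^+-1)\setminus\mathcal F(k)\big)$. *)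

(* Defs.v *)
From mathcomp Require Import all_boot.
Set Implicit Arguments. Unset Strict Implicit. Unset Printing Implicit Defensive.

(* number of 1's in the binary expansion of n (fuel = n suffices) *)
Fixpoint popcount_aux (fuel n : nat) : nat :=
  match fuel with
  | 0 => 0
  | f.+1 => odd n + popcount_aux f n./2
  end.
Definition popcount (n : nat) : nat := popcount_aux n n.

(* Thue-Morse word, 1-indexed: t_i = parity of popcount (i-1) *)
Definition tm (i : nat) : bool := odd (popcount i.-1).

Definition tm_factor (a b : nat) : seq bool := mkseq (fun j => tm (a + j)) (b.+1 - a).

Definition anti_power (k : nat) (w : seq bool) : Prop :=
  exists ws : seq (seq bool),
    [/\ size ws = k, constant (map size ws), uniq ws & flatten ws = w].

Definition inF (k m : nat) : Prop :=
  odd m /\ 0 < m /\ anti_power k (tm_factor 1 (k * m)).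

(* Gamma(k) >= N, with Gamma(k) = sup of the odd positive integers not in F(k) *)
Definition Gamma_ge (k N : nat) : Prop :=
  exists m, [/\ odd m, 0 < m, N <= m & ~ inF k m].

Definition chi (r : nat) : nat := if odd r then 2 else 1.

(* Main.v *)
Require Import Defs.
From mathcomp Require Import all_boot zify.

Lemma half_le n f : n <= f.+1 -> n./2 <= f.
Proof. move=> h; rewrite -divn2; apply: leq_trans (_ : n %/ 2 <= n.-1) _; last lia.
case: n h => [|n] //= h. rewrite divn2 /=. case: n h=> //= n _. rewrite -divn2. have := leq_div n.+1 2. lia. Qed.

Lemma pca0 f : popcount_aux f 0 = 0. Proof. by elim: f. Qed.

Lemma pca_fuel f g n : n <= f -> n <= g -> popcount_aux f n = popcount_aux g n.
Proof.
elim: f g n => [|f IH] [|g] n hf hg //=.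
- have e : n = 0 by lia.
  by rewrite e /= pca0.
- have e : n = 0 by lia.
  by rewrite e /= pca0.
by rewrite (IH g) // half_le.
Qed.


Lemma pcaS f n : popcount_aux f.+1 n = odd n + popcount_aux f n./2. Proof. by []. Qed.

Lemma pc_rec x : popcount x = odd x + popcount x./2.
Proof.
case: x => [|y] //. rewrite /popcount pcaS. congr (_ + _). apply: pca_fuel => //.
  exact: half_le.
Qed.

Lemma pcS (b : bool) n : popcount (b + n.*2) = b + popcount n.
Proof.
rewrite pc_rec oddD odd_double addbF. congr (_ + popcount _); first by case: b.
by case: b; rewrite /= ?add0n ?add1n ?doubleK // uphalf_double.
Qed.

Lemma pc_split n x s : s < 2 ^ n -> popcount (x * 2 ^ n + s) = popcount x + popcount s.
Proof.
elim: n s => [|n IH] s hs.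
  rewrite expn0 in hs. have -> : s = 0 by lia. by rewrite expn0 muln1 !addn0.
rewrite {1}(divn_eq s 2) modn2.
have e : x * 2 ^ n.+1 + (s %/ 2 * 2 + odd s) = odd s + (x * 2 ^ n + s %/ 2).*2.
  rewrite expnS; lia.
rewrite e pcS IH; last by rewrite expnS in hs; rewrite ltn_divLR //; lia.
have -> : popcount s = odd s + popcount (s %/ 2) by rewrite pc_rec divn2.
lia.
Qed.

Definition tmb n := odd (popcount n).

Lemma notAP k m i j : i < j -> j < k ->
  (forall x, x < m -> tmb (i * m + x) = tmb (j * m + x)) ->
  ~ anti_power k (tm_factor 1 (k * m)).
Proof.
move=> hij hjk hx [ws [hs hc hu hf]].
have [L hL] : exists L, map size ws = nseq k L.
  case/(constantP 0): hc => L hL. by exists L; rewrite hL size_map hs.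
have hsz : size (flatten ws) = k * m by rewrite hf size_mkseq; lia.
have hLm : L = m.
  move: hsz; rewrite size_flatten /shape hL sumn_nseq. 
  have : 0 < k by lia. move=> hk. rewrite mulnC => /eqP; rewrite eqn_pmul2l //; by move/eqP.
subst L.
have blk : forall n, n < k -> nth [::] ws n = take m (drop (n * m) (tm_factor 1 (k * m))).
  move=> n hn. rewrite -hf -{1}(flattenK ws) nth_reshape /shape hL take_nseq ?sumn_nseq; last lia.
  by rewrite mulnC nth_nseq hn.
have : nth [::] ws i == nth [::] ws j.
  rewrite blk ?blk; try lia. apply/eqP; apply: (@eq_from_nth _ false).
    rewrite !size_take !size_drop size_mkseq.
    have h1 : i.+1 * m <= k * m by apply: leq_mul; lia.
    have h2 : j.+1 * m <= k * m by apply: leq_mul; lia.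
    rewrite !mulSn in h1 h2. by do 2 case: ltnP => ? ; lia.
  move=> x; rewrite size_take size_drop size_mkseq => hxm.
  have h1 : i.+1 * m <= k * m by apply: leq_mul; lia.
  have h2 : j.+1 * m <= k * m by apply: leq_mul; lia.
  rewrite !mulSn in h1 h2.
  have hxm' : x < m by move: hxm; case: (ltnP m ((k*m).+1 - 1 - i*m)) => ?; lia.
  rewrite !nth_take // !nth_drop !nth_mkseq; try lia.
  rewrite /tm !add1n /=. exact: hx.
by rewrite nth_uniq ?hs; lia.
Qed.

Lemma tmb_shift n m y : tmb (y %/ 2 ^ n + m) = tmb (y %/ 2 ^ n) ->
  tmb (y + 2 ^ n * m) = tmb y.
Proof.
have hp : 0 < 2 ^ n by rewrite expn_gt0.
have hr : y %% 2 ^ n < 2 ^ n by rewrite ltn_mod.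
rewrite /tmb => h.
have -> : y + 2 ^ n * m = (y %/ 2 ^ n + m) * 2 ^ n + y %% 2 ^ n.
  rewrite {1}(divn_eq y (2 ^ n)); lia.
have ey := divn_eq y (2 ^ n).
rewrite pc_split // oddD h -oddD -(pc_split n) // -ey //.
Qed.

Lemma blocks n m i q0 : q0 * 2 ^ n <= i * m -> i * m + m <= (q0 + 3) * 2 ^ n ->
  (forall d, d < 3 -> tmb (q0 + d + m) = tmb (q0 + d)) ->
  forall x, x < m -> tmb (i * m + x) = tmb ((i + 2 ^ n) * m + x).
Proof.
move=> h1 h2 hd x hx.
have hp : 0 < 2 ^ n by rewrite expn_gt0.
have -> : (i + 2 ^ n) * m + x = (i * m + x) + 2 ^ n * m by rewrite mulnDl; lia.
symmetry; apply: tmb_shift.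
have l1 : q0 <= (i * m + x) %/ 2 ^ n by rewrite leq_divRL //; lia.
have l2 : (i * m + x) %/ 2 ^ n < q0 + 3 by rewrite ltn_divLR //; lia.
have -> : (i * m + x) %/ 2 ^ n = q0 + ((i * m + x) %/ 2 ^ n - q0) by lia.
apply: hd; lia.
Qed.

Lemma pc_ones k : popcount (2 ^ k - 1) = k.
Proof.
elim: k => [|k IH] //.
have -> : 2 ^ k.+1 - 1 = true + (2 ^ k - 1).*2.
  have := expn_gt0 2 k; rewrite expnS /=; lia.
by rewrite pcS IH.
Qed.

Lemma pow_split n k : k <= n -> 2 ^ n = 2 ^ (n - k) * 2 ^ k.
Proof. by move=> h; rewrite -expnD subnK. Qed.

Lemma partA a : 3 <= a -> Gamma_ge (2 ^ (2 * a) + 2 ^ a + 2) (3 * 2 ^ (2 * a) - 2 ^ a + 1).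
Proof.
move=> ha.
have hX : 8 <= 2 ^ a by rewrite (_ : 8 = 2 ^ 3) // leq_exp2l.
have e2 : 2 ^ (2 * a) = 2 ^ a * 2 ^ a by rewrite -expnD; congr (2 ^ _); lia.
exists (3 * 2 ^ (2 * a) - 2 ^ a + 1); split => //; last first.
- move=> [_ [_ hap]].
  apply: (@notAP _ _ (2 ^ a + 1) (2 ^ a + 1 + 2 ^ (2 * a)) _ _ _ hap); first lia.
    rewrite e2; lia.
  move=> x hx. apply: (@blocks _ _ _ (3 * 2 ^ a + 2)) => //.
  + rewrite e2; move: (2 ^ a) hX => X hX; nia.
  + rewrite e2; move: (2 ^ a) hX => X hX; nia.
  + move=> d hd. rewrite e2.
    have -> : 3 * 2 ^ a + 2 + d + (3 * (2 ^ a * 2 ^ a) - 2 ^ a + 1)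
       = (3 * 2 ^ a + 2) * 2 ^ a + (3 + d) by nia.
    rewrite /tmb pc_split; last lia. rewrite (pc_split a 3 2); last lia.
    rewrite -[3 * 2 ^ a + 2 + d]addnA (pc_split a 3); last lia.
    by case: d hd => [|[|[|]]].
- lia.
- have [Y eY] : exists Y, 2 ^ a = 2 * Y.
    by exists (2 ^ a.-1); rewrite -expnS prednK //; lia.
  rewrite e2 eY.
  have -> : 3 * (2 * Y * (2 * Y)) - 2 * Y + 1 = 2 * (6 * Y * Y - Y) + 1 by nia.
  by rewrite oddD oddM.
Qed.

Lemma partC r : 4 <= r -> Gamma_ge (2 ^ r + 2) (5 * 2 ^ (r - 1) - 8 * chi r + 1).
Proof.
move=> hr. rewrite /chi.
have [t et] : exists t, r = odd r + 2 * t.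
  exists r./2; have := odd_double_half r; rewrite -muln2; lia.
case ho : (odd r); rewrite ho /= in et.
-
  have h5 : 5 <= r by lia.
  have hG : 1 <= 2 ^ (r - 5) by rewrite expn_gt0.
  have eR : 2 ^ r = 2 ^ (r - 5) * 32 by rewrite (@pow_split _ 5 h5).
  have eH : 2 ^ (r - 1) = 2 ^ (r - 5) * 16.
    by rewrite (@pow_split (r - 1) 4); [congr (2 ^ _ * _); lia | lia].
  rewrite eR eH.
  exists (5 * (2 ^ (r - 5) * 16) - 8 * 2 + 1); split => //; last first.
  + move=> [_ [_ hap]].
    apply: (@notAP _ _ 1 (1 + 2 ^ r) _ _ _ hap); first lia.
      rewrite eR; lia.
    move=> x hx. apply: (@blocks _ _ _ 2) => //.
    * rewrite eR; lia.
    * rewrite eR; lia.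
    * move=> d hd.
      have -> : 2 + d + (5 * (2 ^ (r - 5) * 16) - 8 * 2 + 1)
         = (4 * 2 ^ (r - 5) + (2 ^ (r - 5) - 1)) * 2 ^ 4 + (3 + d) by rewrite expnS; lia.
      rewrite /tmb pc_split; last lia. rewrite pc_split; last lia.
      rewrite pc_ones (_ : r - 5 = 2 * (t - 2)); last lia.
      case: d hd => [|[|[|]]] // _; rewrite /= !oddD ?oddM /=; by case: (odd (t-2)).
  + lia.
  + have -> : 5 * (2 ^ (r - 5) * 16) - 8 * 2 + 1 = 2 * (40 * 2 ^ (r - 5) - 8) + 1 by lia.
    by rewrite oddD oddM.
-
  have hG : 1 <= 2 ^ (r - 4) by rewrite expn_gt0.
  have eR : 2 ^ r = 2 ^ (r - 4) * 16 by rewrite (@pow_split _ 4 hr).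
  have eH : 2 ^ (r - 1) = 2 ^ (r - 4) * 8.
    by rewrite (@pow_split (r - 1) 3); [congr (2 ^ _ * _); lia | lia].
  rewrite eR eH.
  exists (5 * (2 ^ (r - 4) * 8) - 8 * 1 + 1); split => //; last first.
  + move=> [_ [_ hap]].
    apply: (@notAP _ _ 1 (1 + 2 ^ r) _ _ _ hap); first lia.
      rewrite eR; lia.
    move=> x hx. apply: (@blocks _ _ _ 2) => //.
    * rewrite eR; lia.
    * rewrite eR; lia.
    * move=> d hd.
      have -> : 2 + d + (5 * (2 ^ (r - 4) * 8) - 8 * 1 + 1)
         = (4 * 2 ^ (r - 4) + (2 ^ (r - 4) - 1)) * 2 ^ 3 + (3 + d) by rewrite expnS; lia.
      rewrite /tmb pc_split; last lia. rewrite pc_split; last lia.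
      rewrite pc_ones (_ : r - 4 = 2 * (t - 2)); last lia.
      case: d hd => [|[|[|]]] // _; rewrite /= !oddD ?oddM /=; by case: (odd (t-2)).
  + lia.
  + have -> : 5 * (2 ^ (r - 4) * 8) - 8 * 1 + 1 = 2 * (20 * 2 ^ (r - 4) - 4) + 1 by lia.
    by rewrite oddD oddM.
Qed.

Lemma partB b : 9 <= b -> Gamma_ge (2 ^ (2 * b + 1) + 3 * 2 ^ (b + 3) + 49)
               (3 * 2 ^ (2 * b + 1) - 2 ^ (b - 1) + 1).
Proof.
move=> hb.
have hH : 256 <= 2 ^ (b - 1) by rewrite (_ : 256 = 2 ^ 8) // leq_exp2l //; lia.
have e1 : 2 ^ (2 * b + 1) = 8 * (2 ^ (b - 1) * 2 ^ (b - 1)).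
  by rewrite -!expnD (_ : 8 = 2 ^ 3) // -expnD; congr (2 ^ _); lia.
have e2 : 2 ^ (b + 3) = 16 * 2 ^ (b - 1).
  by rewrite (_ : 16 = 2 ^ 4) // -expnD; congr (2 ^ _); lia.
exists (3 * 2 ^ (2 * b + 1) - 2 ^ (b - 1) + 1); split => //; last first.
- move=> [_ [_ hap]].
  apply: (@notAP _ _ (48 * 2 ^ (b - 1) + 48) (48 * 2 ^ (b - 1) + 48 + 2 ^ (2 * b + 1)) _ _ _ hap); first lia.
    rewrite e1 e2; lia.
  move=> x hx. apply: (@blocks _ _ _ (144 * 2 ^ (b - 1) + 138)) => //.
  + rewrite e1; move: (2 ^ (b - 1)) hH => X hX; nia.
  + rewrite e1; move: (2 ^ (b - 1)) hH => X hX; nia.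
  + move=> d hd. rewrite e1.
    have -> : 144 * 2 ^ (b - 1) + 138 + d + (3 * (8 * (2 ^ (b - 1) * 2 ^ (b - 1))) - 2 ^ (b - 1) + 1)
       = (24 * 2 ^ (b - 1) + 143) * 2 ^ (b - 1) + (139 + d) by nia.
    rewrite /tmb pc_split; last lia. rewrite (pc_split (b - 1) 24 143); last lia.
    rewrite -[144 * 2 ^ (b - 1) + 138 + d]addnA (pc_split (b - 1) 144); last lia.
    by case: d hd => [|[|[|]]].
- lia.
- have [Y eY] : exists Y, 2 ^ (b - 1) = 2 * Y.
    by exists (2 ^ (b - 2)); rewrite -expnS; congr (2 ^ _); lia.
  rewrite e1 eY.
  have -> : 3 * (8 * (2 * Y * (2 * Y))) - 2 * Y + 1 = 2 * (48 * Y * Y - Y) + 1 by nia.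
  by rewrite oddD oddM.
Qed.

Theorem lemma2 (a b r : nat) :
  3 <= a -> 9 <= b -> 4 <= r ->
  [/\ Gamma_ge (2 ^ (2 * a) + 2 ^ a + 2) (3 * 2 ^ (2 * a) - 2 ^ a + 1),
      Gamma_ge (2 ^ (2 * b + 1) + 3 * 2 ^ (b + 3) + 49)
               (3 * 2 ^ (2 * b + 1) - 2 ^ (b - 1) + 1)
    & Gamma_ge (2 ^ r + 2) (5 * 2 ^ (r - 1) - 8 * chi r + 1)].
Proof. by move=> ha hb hr; split; [apply: partA | apply: partB | apply: partC]. Qed.
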